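(* Let $\Omega = \{-1\} \cup [0,\infty)$, let $E$ be the Banach space of all bounded continuous real functions on $\Omega$ with the supremum norm $\|\cdot\|$, and let $$C = \{ x \in E : 0 \le x(u) \le 1 \text{ for all } u \in \Omega,\ |x(u_1)-x(u_2)| \le |u_1-u_2| \text{ for all } u_1,u_2 \in [0,\infty)\}.$$ For $x \in C$ and $v \ge 0$ put $\alpha_x(v) = \sup\{ x(s) : s \in \{-1\}\cup[v,\infty)\}$. Then: (i) $|\alpha_x(u_1) - \alpha_x(u_2)| \le |u_1 - u_2|$ for all $x \in C$ and $u_1,u_2 \in [0,\infty)$; (ii) $|\alpha_x(u) - \alpha_y(u)| \le \|x-y\|$ for all $x,y \in C$ and $u \in [0,\infty)$. *)

(* Defs.v *)
From HB Require Import structures.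
From mathcomp Require Import all_boot all_order all_algebra.
From mathcomp Require Import all_classical all_reals all_analysis.
Set Implicit Arguments. Unset Strict Implicit. Unset Printing Implicit Defensive.
Import Order.TTheory GRing.Theory Num.Theory.
Import numFieldNormedType.Exports.
Local Open Scope classical_set_scope.
Local Open Scope ring_scope.

Section Defs.
Variable R : realType.

Definition Omega : set R := [set u | u = -1 \/ 0 <= u].

(* x (a function R -> R, only its values on Omega matter) is an element of E:
   bounded and continuous on Omega *)
Definition in_E (x : R -> R) : Prop :=
  (exists M : R, forall u, Omega u -> `|x u| <= M) /\
  {within Omega, continuous x}.

Definition in_C (x : R -> R) : Prop :=
  in_E x /\
  (forall u, Omega u -> 0 <= x u <= 1) /\
  (forall u1 u2, 0 <= u1 -> 0 <= u2 -> `|x u1 - x u2| <= `|u1 - u2|).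

Definition supnorm (x : R -> R) : R := sup [set `|x u| | u in Omega].

Definition alpha (x : R -> R) (v : R) : R :=
  sup [set x s | s in [set s | s = -1 \/ v <= s]].

End Defs.

(* Main.v *)
Require Import Defs.
From HB Require Import structures.
From mathcomp Require Import all_boot all_order all_algebra.
From mathcomp Require Import all_classical all_reals all_analysis.
From mathcomp Require Import lra.
Import Order.TTheory GRing.Theory Num.Theory.
Import numFieldNormedType.Exports.
Local Open Scope classical_set_scope.
Local Open Scope ring_scope.

Set Implicit Arguments.
Section H.
Variable R : realType.

Lemma alpha_ub (x : R -> R) v s : in_C x -> 0 <= v -> (s = -1 \/ v <= s) ->
  x s <= alpha x v.
Proof.
move=> [_ [hb _]] hv hs.
apply: sup_upper_bound; last by exists s.
split; first by exists (x s); exists s.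
exists 1 => _ [t ht <-].
have: Omega t by case: ht => [->|h]; [left|right; exact: le_trans h].
by move/hb => /andP[].
Qed.

Lemma alpha_le (x : R -> R) v M : (forall s, (s = -1 \/ v <= s) -> x s <= M) ->
  alpha x v <= M.
Proof.
move=> h; apply: ge_sup; first by exists (x (-1)); exists (-1) => //; left.
by move=> _ [t ht <-]; apply: h.
Qed.

Lemma supnorm_ub (x y : R -> R) u : in_C x -> in_C y -> Omega u ->
  `|x u - y u| <= supnorm (x \- y).
Proof.
move=> [_ [hx _]] [_ [hy _]] hu.
apply: sup_upper_bound; last by exists u.
split; first by exists `|x u - y u|; exists u.
exists 1 => _ [t ht <-] /=.
move: (hx t ht) (hy t ht) => /andP[? ?] /andP[? ?].
rewrite ler_norml; apply/andP; split; lra.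
Qed.

End H.
Unset Implicit Arguments.
Arguments alpha_ub {R x v s}.
Arguments supnorm_ub {R x y u}.

Theorem lemma2p2 (R : realType) :
  (forall (x : R -> R) (u1 u2 : R), in_C x -> 0 <= u1 -> 0 <= u2 ->
      `|alpha x u1 - alpha x u2| <= `|u1 - u2|) /\
  (forall (x y : R -> R) (u : R), in_C x -> in_C y -> 0 <= u ->
      `|alpha x u - alpha y u| <= supnorm (x \- y)).
Proof.
split.
- have key : forall (x : R -> R) (u1 u2 : R), in_C x -> 0 <= u1 -> u1 <= u2 ->
      `|alpha x u1 - alpha x u2| <= `|u1 - u2|.
    move=> x u1 u2 hC h1 h12.
    have h2 : 0 <= u2 by exact: le_trans h12.
    have A : alpha x u2 <= alpha x u1.
      apply: alpha_le => s [->|hs]; apply: alpha_ub => //; first by left.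
      by right; exact: le_trans hs.
    have B : alpha x u1 <= alpha x u2 + (u2 - u1).
      apply: alpha_le => s [->|hs].
        have := @alpha_ub R x u2 (-1) hC h2 (or_introl erefl); lra.
      case: (leP u2 s) => hs2.
        have := alpha_ub hC h2 (or_intror hs2); lra.
      have := alpha_ub hC h2 (or_intror (lexx u2)).
      have := hC.2.2 s u2 (le_trans h1 hs) h2.
      have -> : `|s - u2| = u2 - s by rewrite ler0_norm ?opprB // subr_le0 ltW.
      rewrite ler_norml => /andP[? ?].
      lra.
    rewrite (ler0_norm (x := u1 - u2)); last lra.
    rewrite ler_norml; apply/andP; split; lra.
  move=> x u1 u2 hC h1 h2; case: (leP u1 u2) => h.
    exact: key.
  by rewrite distrC (distrC u1); apply: key => //; exact: ltW.
- have key : forall (x y : R -> R) (u : R), in_C x -> in_C y -> 0 <= u ->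
      alpha x u <= alpha y u + supnorm (x \- y).
    move=> x y u hx hy hu; apply: alpha_le => s hs.
    have hO : Omega s by case: hs => [->|h]; [left|right; exact: le_trans h].
    have := supnorm_ub hx hy hO; rewrite ler_norml => /andP[? ?].
    have := alpha_ub hy hu hs; lra.
  move=> x y u hx hy hu.
  have e : supnorm (y \- x) = supnorm (x \- y).
    rewrite /supnorm; congr sup; apply/funext => r; apply/propext.
    by split => -[t ht <-]; exists t => //=; rewrite distrC.
  have := key x y u hx hy hu; have := key y x u hy hx hu; rewrite e => ? ?.
  rewrite ler_norml; apply/andP; split; lra.
Qed.
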